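(* Consider a single invocation of an MPI barrier among a set of participating MPI ranks, and a checkpoint coordinator that sends a first message to each participating rank, each rank replying with its current status relative to the barrier (not yet entered, inside, or exited). If at least one of the replies to the first messages reports that its rank has exited the barrier, and the coordinator, after receiving these replies, sends a second message to each participating rank, then each participating rank will reply to the second message that it has entered the barrier (and possibly also exited it).
   Context: Events (sending/receiving messages, entering/exiting a barrier) are ordered by Lamport's happens-before relation; a rank's reply to a message reflects its state at the moment of replying, which happens after it received the message and before the coordinator receives the reply. Barrier axiom (assumed): for a given invocation of an MPI barrier, it never happens that a rank A exits the barrier before (under happens-before) another participating rank B enters that barrier. *)

(* Defs.v *)
Inductive barrier_status := NotEntered | Inside | Exited.

(* An execution: events ordered by Lamport's happens-before (a strict
   partial order); each event is located at a rank (Some r) or at the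
   checkpoint coordinator (None); events at one location are totally
   ordered (sequential processes).  enter r / exit r are the (possibly
   absent) events at which rank r enters / exits the barrier invocation. *)
Record execution := {
  Ev : Type;
  hb : Ev -> Ev -> Prop;
  hb_irrefl : forall e, ~ hb e e;
  hb_trans : forall e1 e2 e3, hb e1 e2 -> hb e2 e3 -> hb e1 e3;
  Rank : Type;
  participant : Rank -> Prop;
  loc : Ev -> option Rank;
  loc_total : forall e1 e2, loc e1 = loc e2 -> e1 = e2 \/ hb e1 e2 \/ hb e2 e1;
  enter : Rank -> option Ev;
  exit : Rank -> option Ev;
  enter_loc : forall r x, enter r = Some x -> loc x = Some r;
  exit_loc : forall r x, exit r = Some x -> loc x = Some r;
  exit_after_enter : forall r x, exit r = Some x ->
      exists y, enter r = Some y /\ hb y x;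
  (* Barrier axiom: no participating rank A exits before (under hb) a
     participating rank B enters (in particular A cannot exit if B never
     enters). *)
  barrier_axiom : forall A B xa, participant A -> participant B ->
      exit A = Some xa -> exists xb, enter B = Some xb /\ ~ hb xa xb
}.

Definition status_at (X : execution) (r : Rank X) (e : Ev X)
    (s : barrier_status) : Prop :=
  match s with
  | Exited => exists x, exit X r = Some x /\ hb X x e
  | Inside => (exists x, enter X r = Some x /\ hb X x e) /\
              ~ (exists x, exit X r = Some x /\ hb X x e)
  | NotEntered => ~ (exists x, enter X r = Some x /\ hb X x e)
  end.

(* Main.v *)
Require Import Defs.
From Stdlib Require Import Classical.

Theorem lemma1 (X : execution)
  (* first round: coordinator sends, rank receives, rank replies,
     coordinator receives the reply *)
  (send1 recv1 reply1 getrep1 : Rank X -> Ev X)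
  (* second round *)
  (send2 recv2 reply2 getrep2 : Rank X -> Ev X)
  (Hloc_send1 : forall r, loc X (send1 r) = None)
  (Hloc_recv1 : forall r, loc X (recv1 r) = Some r)
  (Hloc_reply1 : forall r, loc X (reply1 r) = Some r)
  (Hloc_getrep1 : forall r, loc X (getrep1 r) = None)
  (Hloc_send2 : forall r, loc X (send2 r) = None)
  (Hloc_recv2 : forall r, loc X (recv2 r) = Some r)
  (Hloc_reply2 : forall r, loc X (reply2 r) = Some r)
  (Hloc_getrep2 : forall r, loc X (getrep2 r) = None)
  (* message and reply ordering *)
  (H1a : forall r, participant X r -> hb X (send1 r) (recv1 r))
  (H1b : forall r, participant X r -> hb X (recv1 r) (reply1 r))
  (H1c : forall r, participant X r -> hb X (reply1 r) (getrep1 r))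
  (* the second messages are sent after receiving all first replies *)
  (Hafter : forall r r', participant X r -> participant X r' ->
              hb X (getrep1 r') (send2 r))
  (H2a : forall r, participant X r -> hb X (send2 r) (recv2 r))
  (H2b : forall r, participant X r -> hb X (recv2 r) (reply2 r))
  (H2c : forall r, participant X r -> hb X (reply2 r) (getrep2 r))
  (* at least one first reply reports that its rank has exited *)
  (Hexited : exists A, participant X A /\ status_at X A (reply1 A) Exited) :
  forall r, participant X r ->
    status_at X r (reply2 r) Inside \/ status_at X r (reply2 r) Exited.
Proof.
  intros r Hr.
  destruct Hexited as [A [HA [xa [Hxa Hhb]]]].
  destruct (barrier_axiom X A r xa HA Hr Hxa) as [xb [Hxb Hn]].
  assert (Hchain : hb X xa (reply2 r)).
  { eapply hb_trans. exact Hhb.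
    eapply hb_trans. apply H1c; exact HA.
    eapply hb_trans. apply (Hafter r A Hr HA).
    eapply hb_trans. apply H2a; exact Hr. apply H2b; exact Hr. }
  assert (Hl : loc X xb = loc X (reply2 r)).
  { rewrite (enter_loc X r xb Hxb), Hloc_reply2. reflexivity. }
  destruct (loc_total X _ _ Hl) as [Heq | [Hb | Hb]].
  - subst xb. contradiction.
  - destruct (classic (exists x, exit X r = Some x /\ hb X x (reply2 r))) as [He | He].
    + right. exact He.
    + left. split; [exists xb; split; assumption | exact He].
  - exfalso. apply Hn. eapply hb_trans; eassumption.
Qed.
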